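(* For any $M\in\mathbb{N}$ and any $\delta>0$, there exists a $\textsc{ReLU}$ network $f:\mathbb R\rightarrow\mathbb R^2$ of width $2$ such that for all $x\in[0,1]\setminus\mathcal D_{M,\delta}$, $$f(x)=\big(q_M(x),\ 2^M\,(x-q_M(x))\big),$$ where $\mathcal D_{M,\delta}:=\bigcup_{i=1}^{2^M-1}(i\cdot2^{-M}-\delta,\ i\cdot 2^{-M})$. Furthermore, $f(\mathbb R)\subset[0,1-2^{-M}]\times[0,1]$.
   Context: $\mathcal C_M:=\{0,2^{-M},2\cdot2^{-M},\dots,1-2^{-M}\}$ and $q_M:[0,1]\to\mathcal C_M$, $q_M(x)=\max\{c\in\mathcal C_M:c\le x\}$. A $\textsc{ReLU}$ network is $t_L\circ\sigma_{L-1}\circ\cdots\circ\sigma_1\circ t_1$ with affine $t_\ell:\mathbb R^{d_{\ell-1}}\to\mathbb R^{d_\ell}$ and coordinatewise $\textsc{ReLU}$ $\sigma_\ell$; its width is $\max\{d_1,\dots,d_{L-1}\}$. *)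

(* Defs.v *)
From Stdlib Require Import Reals Lra List.
Import ListNotations.
Open Scope R_scope.

Definition in_CM (M : nat) (c : R) : Prop :=
  exists k : nat, (k < 2 ^ M)%nat /\ c = INR k / 2 ^ M.

Definition is_qM (M : nat) (x c : R) : Prop :=
  in_CM M c /\ c <= x /\ (forall c', in_CM M c' -> c' <= x -> c' <= c).

Definition in_DM (M : nat) (delta x : R) : Prop :=
  exists i : nat, (1 <= i <= 2 ^ M - 1)%nat /\
    INR i / 2 ^ M - delta < x /\ x < INR i / 2 ^ M.

(** ReLU networks. Vectors in R^d are represented as functions nat -> R
    (only the first d coordinates are ever read). An affine layer
    t : R^din -> R^dout is given by a weight matrix and a bias. *)
Record layer : Type := mkLayer {
  din : nat; dout : nat;
  weight : nat -> nat -> R;   (* weight i j : row i < dout, column j < din *)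
  bias : nat -> R }.

Fixpoint sum_to (n : nat) (f : nat -> R) : R :=
  match n with O => 0 | S n' => sum_to n' f + f n' end.

Definition affine (l : layer) (v : nat -> R) : nat -> R :=
  fun i => sum_to (din l) (fun j => weight l i j * v j) + bias l i.

Definition relu (v : nat -> R) : nat -> R := fun i => Rmax 0 (v i).

Fixpoint eval_net (ls : list layer) (v : nat -> R) : nat -> R :=
  match ls with
  | [] => v
  | [l] => affine l v
  | l :: ls' => eval_net ls' (relu (affine l v))
  end.

Fixpoint chain (n m : nat) (ls : list layer) : Prop :=
  match ls with
  | [] => False
  | [l] => din l = n /\ dout l = m
  | l :: ls' => din l = n /\ chain (dout l) m ls'
  end.

Definition width (ls : list layer) : nat :=
  fold_right Nat.max 0%nat (map dout (removelast ls)).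

Definition net_apply (ls : list layer) (x : R) : nat -> R :=
  eval_net ls (fun j => if Nat.eqb j 0 then x else 0).

(* Main.v *)
Require Import Defs.
From Stdlib Require Import Reals List.
From Stdlib Require Import Lra Lia Arith.
Import ListNotations.
Open Scope R_scope.

Definition lay2 (w00 w01 b0 w10 w11 b1 : R) : layer :=
  mkLayer 2 2
    (fun i j => match i, j with
                | O, O => w00 | O, S O => w01 | S O, O => w10 | S O, S O => w11
                | _, _ => 0 end)
    (fun i => match i with O => b0 | S O => b1 | _ => 0 end).

Lemma lay2_0 w00 w01 b0 w10 w11 b1 v :
  affine (lay2 w00 w01 b0 w10 w11 b1) v 0%nat = w00 * v 0%nat + w01 * v 1%nat + b0.
Proof. unfold affine; simpl; ring. Qed.
Lemma lay2_1 w00 w01 b0 w10 w11 b1 v :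
  affine (lay2 w00 w01 b0 w10 w11 b1) v 1%nat = w10 * v 0%nat + w11 * v 1%nat + b1.
Proof. unfold affine; simpl; ring. Qed.

Definition cc (n : R) (k : nat) : R := INR k / n.
Definition vf (n d : R) (k : nat) (X : R) : R := cc n k * (X - cc n k + d) / d.

Fixpoint qk (n d : R) (k : nat) (X : R) : R :=
  match k with
  | O => 0
  | S k' => cc n k - Rmax 0 (cc n k - (vf n d k X + Rmax 0 (qk n d k' X - vf n d k X)))
  end.

Definition L0 : layer :=
  mkLayer 1 2 (fun _ _ => 1) (fun i => match i with S O => -1 | _ => 0 end).
Definition L1 : layer := lay2 1 (-1) 0 0 0 0.
Definition LA (n d : R) (k : nat) : layer :=
  lay2 1 0 0 (- (cc n (S k) / d)) (-1) (cc n k + cc n (S k) * (cc n (S k) - d) / d).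
Definition LB (n d : R) (k : nat) : layer :=
  lay2 1 0 0 (- (cc n (S k) / d)) (-1) (cc n (S k) + cc n (S k) * (cc n (S k) - d) / d).
Fixpoint thr (n d : R) (k : nat) : list layer :=
  match k with O => [] | S k' => thr n d k' ++ [LA n d k'; LB n d k'] end.
Definition LF (n : R) (m : nat) : layer := lay2 0 (-1) (cc n m) n n (- n * cc n m).

Definition hid (ls : list layer) (v : nat -> R) : nat -> R :=
  fold_left (fun w l => relu (affine l w)) ls v.

Lemma eval_app ls1 ls2 v : ls2 <> [] -> eval_net (ls1 ++ ls2) v = eval_net ls2 (hid ls1 v).
Proof.
  intro H. revert v. induction ls1 as [|l ls1 IH]; intro v; simpl; auto.
  rewrite <- IH. destruct (ls1 ++ ls2) eqn:E.
  - destruct ls1; destruct ls2; simpl in E; try discriminate; congruence.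
  - reflexivity.
Qed.

Definition Xc (x : R) : R := Rmax 0 (Rmax 0 x - Rmax 0 (x - 1)).

Lemma Xc_range x : 0 <= Xc x <= 1.
Proof. unfold Xc, Rmax; repeat destruct Rle_dec; lra. Qed.
Lemma Xc_id x : 0 <= x <= 1 -> Xc x = x.
Proof. intros; unfold Xc, Rmax; repeat destruct Rle_dec; lra. Qed.

Definition inp (x : R) : nat -> R := fun j => if Nat.eqb j 0 then x else 0.

Lemma hid_state n d k x : d <> 0 ->
  hid (L0 :: L1 :: thr n d k) (inp x) 0%nat = Xc x /\
  hid (L0 :: L1 :: thr n d k) (inp x) 1%nat = cc n k - qk n d k (Xc x).
Proof.
  intro Hd. induction k as [|k IH].
  - unfold hid; simpl. unfold relu. unfold affine, Xc, cc; simpl.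
    unfold inp; simpl. split.
    + replace (0 + 1 * x + 0) with x by ring. replace (0 + 1 * x + -1) with (x - 1) by ring.
      f_equal. ring.
    + unfold Rdiv; rewrite Rmult_0_l. unfold Rmax; destruct Rle_dec; lra.
  - destruct IH as [I0 I1].
    change (L0 :: L1 :: thr n d (S k)) with
      ((L0 :: L1 :: thr n d k) ++ [LA n d k; LB n d k]).
    unfold hid in *. rewrite fold_left_app.
    revert I0 I1. generalize (fold_left (fun w l => relu (affine l w)) (L0 :: L1 :: thr n d k) (inp x)).
    intros w I0 I1. cbn [fold_left].
    unfold relu. unfold LB, LA. rewrite !lay2_0, !lay2_1.
    rewrite !lay2_0. rewrite I0, I1.
    pose proof (Xc_range x) as HX.
    replace (1 * Xc x + 0 * (cc n k - qk n d k (Xc x)) + 0) with (Xc x) by ring.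
    rewrite (Rmax_right 0 (Xc x)) by lra.
    split.
    + rewrite Rmult_0_l. replace (1 * Xc x + 0 + 0) with (Xc x) by ring.
      rewrite Rmax_right by lra. reflexivity.
    + simpl qk.
      replace (- (cc n (S k) / d) * Xc x + -1 * (cc n k - qk n d k (Xc x)) + (cc n k + cc n (S k) * (cc n (S k) - d) / d))
        with (qk n d k (Xc x) - vf n d (S k) (Xc x)) by (unfold vf; field; auto).
      replace (- (cc n (S k) / d) * Xc x + -1 * Rmax 0 (qk n d k (Xc x) - vf n d (S k) (Xc x)) + (cc n (S k) + cc n (S k) * (cc n (S k) - d) / d))
        with (cc n (S k) - (vf n d (S k) (Xc x) + Rmax 0 (qk n d k (Xc x) - vf n d (S k) (Xc x)))) by (unfold vf; field; auto).
      ring.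
Qed.

Lemma cc_S n k : 0 < n -> cc n (S k) = cc n k + / n.
Proof. intro; unfold cc; rewrite S_INR; field; lra. Qed.
Lemma cc_ge0 n k : 0 < n -> 0 <= cc n k.
Proof. intro; unfold cc; apply Rmult_le_pos; [apply pos_INR|left; apply Rinv_0_lt_compat; lra]. Qed.
Lemma cc_mono n i j : 0 < n -> (i <= j)%nat -> cc n i <= cc n j.
Proof. intros; unfold cc, Rdiv; apply Rmult_le_compat_r; [left; apply Rinv_0_lt_compat; lra| apply le_INR; auto]. Qed.

Lemma vf_eq n d k X : 0 < d -> vf n d k X * d = cc n k * (X - cc n k + d).
Proof. intros; unfold vf; field; lra. Qed.

Lemma vf_hi n d k X : 0 < n -> 0 < d -> cc n k <= X -> cc n k <= vf n d k X.
Proof. intros. pose proof (vf_eq n d k X H0). pose proof (cc_ge0 n k H). nra. Qed.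
Lemma vf_lo n d k X : 0 < n -> 0 < d -> X <= cc n k - d -> vf n d k X <= 0.
Proof. intros. pose proof (vf_eq n d k X H0). pose proof (cc_ge0 n k H). nra. Qed.
Lemma vf_mid n d k X : 0 < d -> d <= cc n k -> X <= cc n k -> vf n d k X <= X.
Proof. intros. pose proof (vf_eq n d k X H). nra. Qed.

Ltac rmx := unfold Rmax in *; repeat destruct Rle_dec; lra.

Section Props.
Lemma P1 n d X k : 0 < n -> 0 < d -> 0 <= qk n d k X <= cc n k.
Proof.
  intros Hn Hd. induction k as [|k IH]; simpl.
  - unfold cc; simpl; unfold Rdiv; rewrite Rmult_0_l; lra.
  - pose proof (cc_ge0 n (S k) Hn). pose proof (cc_S n k Hn).
    pose proof (Rinv_0_lt_compat n Hn).
    set (v := vf n d (S k) X) in *. set (q := qk n d k X) in *. rmx.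
Qed.

Lemma P2 n d X k : 0 < n -> 0 < d -> d <= / n -> 0 <= X -> qk n d k X <= X.
Proof.
  intros Hn Hd Hdn HX. induction k as [|k IH]; simpl; [lra|].
  pose proof (cc_ge0 n k Hn). pose proof (cc_S n k Hn).
  destruct (Rle_dec (cc n (S k)) X).
  - set (v := vf n d (S k) X) in *. set (q := qk n d k X) in *. rmx.
  - pose proof (vf_mid n d (S k) X Hd ltac:(lra) ltac:(lra)).
    set (v := vf n d (S k) X) in *. set (q := qk n d k X) in *. rmx.
Qed.

Lemma P3 n d X k : 0 < n -> 0 < d -> Rmin (cc n k) (X - / n) <= qk n d k X.
Proof.
  intros Hn Hd. induction k as [|k IH]; simpl.
  - unfold cc, Rmin; simpl; unfold Rdiv; rewrite Rmult_0_l; destruct Rle_dec; lra.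
  - pose proof (cc_ge0 n k Hn). pose proof (cc_S n k Hn).
    pose proof (P1 n d X k Hn Hd).
    destruct (Rle_dec (cc n (S k)) X).
    + pose proof (vf_hi n d (S k) X Hn Hd r).
      set (v := vf n d (S k) X) in *. set (q := qk n d k X) in *. unfold Rmin in *; rmx.
    + set (v := vf n d (S k) X) in *. set (q := qk n d k X) in *. unfold Rmin in *; rmx.
Qed.

Lemma P4 n d X k : 0 < n -> 0 < d -> cc n k <= X -> qk n d k X = cc n k.
Proof.
  intros Hn Hd HX. destruct k as [|k]; simpl.
  - unfold cc; simpl; unfold Rdiv; rewrite Rmult_0_l; lra.
  - pose proof (vf_hi n d (S k) X Hn Hd HX). pose proof (P1 n d X k Hn Hd).
    set (v := vf n d (S k) X) in *. set (q := qk n d k X) in *. rmx.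
Qed.

Lemma P5 n d X j k : 0 < n -> 0 < d -> (j <= k)%nat -> qk n d j X = cc n j ->
  (forall i, (j < i <= k)%nat -> X <= cc n i - d) -> qk n d k X = cc n j.
Proof.
  intros Hn Hd. induction k as [|k IH]; intros Hjk Hq Hi.
  - replace j with 0%nat in * by lia. auto.
  - destruct (Nat.eq_dec j (S k)) as [->|Hne]; auto.
    assert (IH' : qk n d k X = cc n j) by (apply IH; [lia|auto|intros; apply Hi; lia]).
    simpl. pose proof (vf_lo n d (S k) X Hn Hd (Hi (S k) ltac:(lia))).
    pose proof (P1 n d X k Hn Hd). pose proof (cc_S n k Hn). pose proof (Rinv_0_lt_compat n Hn).
    rewrite <- IH'.
    set (v := vf n d (S k) X) in *. set (q := qk n d k X) in *. rmx.
Qed.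
End Props.

Lemma chain_cons l ls a b : ls <> [] -> din l = a -> chain (dout l) b ls -> chain a b (l :: ls).
Proof. intros H1 H2 H3. destruct ls; [congruence|]. simpl. auto. Qed.

Lemma chain_thr n d k ls : chain 2 2 ls -> chain 2 2 (thr n d k ++ ls).
Proof.
  revert ls. induction k as [|k IH]; intros ls H; simpl; auto.
  rewrite <- app_assoc. apply IH. cbn [app].
  apply chain_cons; [discriminate|reflexivity|].
  apply chain_cons; [destruct ls; simpl in H; [contradiction|discriminate]|reflexivity|exact H].
Qed.

Lemma thr_dout n d k : Forall (fun l => dout l = 2%nat) (thr n d k).
Proof.
  induction k as [|k IH]; simpl; auto. apply Forall_app; split; auto.
Qed.

Lemma fold_le2 ls : Forall (fun l => dout l = 2%nat) ls -> (fold_right Nat.max 0 (map dout ls) <= 2)%nat.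
Proof. induction 1; simpl; lia. Qed.

Theorem lemma11 (M : nat) (delta : R) (hdelta : 0 < delta) :
  exists ls : list layer,
    chain 1 2 ls /\ width ls = 2%nat /\
    (forall x : R, 0 <= x <= 1 -> ~ in_DM M delta x ->
       forall c : R, is_qM M x c ->
         net_apply ls x 0%nat = c /\
         net_apply ls x 1%nat = 2 ^ M * (x - c)) /\
    (forall x : R,
       0 <= net_apply ls x 0%nat <= 1 - / 2 ^ M /\
       0 <= net_apply ls x 1%nat <= 1).
Proof.
  set (n := 2 ^ M).
  assert (Hn : 0 < n) by (apply pow_lt; lra).
  set (d := Rmin delta (/ n)).
  assert (Hd : 0 < d) by (unfold d, Rmin; destruct Rle_dec; [lra|apply Rinv_0_lt_compat; lra]).
  assert (Hdn : d <= / n) by apply Rmin_r.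
  assert (Hdd : d <= delta) by apply Rmin_l.
  assert (HN : (2 ^ M <> 0)%nat) by (apply Nat.pow_nonzero; lia).
  set (m := (2 ^ M - 1)%nat).
  assert (Hcm : cc n m = 1 - / n).
  { unfold cc, m. rewrite minus_INR by lia. rewrite pow_INR. simpl INR. fold n.
    replace (1 + 1) with 2 by ring. fold n. field. lra. }
  exists (L0 :: L1 :: thr n d m ++ [LF n m]).
  assert (Hnet : forall x, net_apply (L0 :: L1 :: thr n d m ++ [LF n m]) x 0%nat = qk n d m (Xc x) /\
                 net_apply (L0 :: L1 :: thr n d m ++ [LF n m]) x 1%nat = n * (Xc x - qk n d m (Xc x))).
  { intro x. unfold net_apply.
    change (L0 :: L1 :: thr n d m ++ [LF n m]) with ((L0 :: L1 :: thr n d m) ++ [LF n m]).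
    rewrite eval_app by discriminate. cbn [eval_net]. fold (inp x).
    destruct (hid_state n d m x ltac:(lra)) as [H0 H1].
    unfold LF; rewrite lay2_0, lay2_1, H0, H1. split; ring. }
  split; [|split; [|split]].
  - apply chain_cons; [discriminate|reflexivity|].
    apply chain_cons; [destruct (thr n d m); discriminate|reflexivity|].
    apply chain_thr. simpl. auto.
  - unfold width. change (L0 :: L1 :: thr n d m ++ [LF n m]) with ((L0 :: L1 :: thr n d m) ++ [LF n m]).
    rewrite removelast_last. cbn [map fold_right]. change (dout L0) with 2%nat. change (dout L1) with 2%nat.
    pose proof (fold_le2 _ (thr_dout n d m)). lia.
  - intros x Hx HD c [[k [Hk ->]] [Hcx Hmax]].
    destruct (Hnet x) as [E0 E1]. rewrite E0, E1. rewrite Xc_id by auto.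
    idtac.
    assert (Hq : qk n d m x = cc n k).
    { apply P5; auto. unfold m; lia. apply P4; auto.
      intros i Hi.
      assert (Hlt : x < cc n (S k)).
      { destruct (Rlt_le_dec x (cc n (S k))) as [|Hle]; auto.
        exfalso. assert (cc n (S k) <= INR k / n) by (apply Hmax; auto; exists (S k); split; [unfold m in Hi; lia|reflexivity]).
        rewrite cc_S in H by auto. unfold cc in H. pose proof (Rinv_0_lt_compat n Hn). lra. }
      assert (Hle : x <= cc n (S k) - delta).
      { destruct (Rle_dec x (cc n (S k) - delta)) as [|Hnle]; auto.
        exfalso. apply HD. exists (S k). split; [unfold m in Hi; lia|]. fold n. unfold cc in *. lra. }
      pose proof (cc_mono n (S k) i Hn ltac:(lia)). lra. }
    rewrite Hq. unfold cc. split; reflexivity.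
  - intro x. destruct (Hnet x) as [E0 E1]. rewrite E0, E1. fold n.
    pose proof (Xc_range x). pose proof (P1 n d (Xc x) m Hn Hd).
    pose proof (P2 n d (Xc x) m Hn Hd Hdn ltac:(lra)).
    pose proof (P3 n d (Xc x) m Hn Hd).
    assert (Rmin (cc n m) (Xc x - / n) = Xc x - / n) by (apply Rmin_right; lra).
    split; [lra|]. split; [apply Rmult_le_pos; lra|].
    assert (Xc x - qk n d m (Xc x) <= / n) by lra.
    apply Rmult_le_compat_l with (r := n) in H4; [|lra]. rewrite Rinv_r in H4; lra.
Qed.
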